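(* Let $I\subset\mathbb{R}$ be an open interval, let $\bm{a}:I\to\mathbb{R}^2_1$ be a frontal with Gauss mapping $\bm{\nu}:I\to H^1$ (or $S^1_1$), and let $r:I\to\mathbb{R}^+$ be a smooth positive function. Suppose the pseudo-circle family $C_{(\bm{a}(t),\pm r(t))}$ creates an envelope $f:I\to\mathbb{R}^2_1$, and write $f(t)=\bm{a}(t)+r(t)\tilde{\bm{\nu}}(t)$ with $\tilde{\bm{\nu}}:I\to S^1_1$ (for the family with $+r$) or $\tilde{\bm{\nu}}:I\to H^1$ (for the family with $-r$). Then: (1) If $\epsilon_{\tilde{\bm{\nu}}}\cdot\epsilon_{\bm{\mu}}=1$, then $\tilde{\bm{\nu}}(t)=\cosh\theta(t)\bm{\mu}(t)\pm\sinh\theta(t)\bm{\nu}(t)$ or $\tilde{\bm{\nu}}(t)=-\cosh\theta(t)\bm{\mu}(t)\pm\sinh\theta(t)\bm{\nu}(t)$, where $\theta:I\to\mathbb{R}$ is a function satisfying $\frac{dr}{dt}(t)+\beta(t)\cosh\theta(t)=0$ or $\frac{dr}{dt}(t)-\beta(t)\cosh\theta(t)=0$ for all $t\in I$. (2) If $\epsilon_{\tilde{\bm{\nu}}}\cdot\epsilon_{\bm{\mu}}=-1$, then $\tilde{\bm{\nu}}(t)=\sinh\theta(t)\bm{\mu}(t)\pm\cosh\theta(t)\bm{\nu}(t)$, where $\theta:I\to\mathbb{R}$ is a function satisfying $\frac{dr}{dt}(t)-\beta(t)\sinh\theta(t)=0$ for all $t\in I$.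
   Context: All objects are $C^\infty$. The Minkowski plane $\mathbb{R}^2_1$ is $\mathbb{R}^2$ with $\langle\bm{x},\bm{y}\rangle=-x_1y_1+x_2y_2$; $S^1_1=\{\bm{x}:\langle\bm{x},\bm{x}\rangle=1\}$, $H^1=\{\bm{x}:\langle\bm{x},\bm{x}\rangle=-1\}$. For non-lightlike $\bm{x}$, $\epsilon_{\bm{x}}=1$ if $\bm{x}$ is spacelike ($\langle\bm{x},\bm{x}\rangle>0$) and $-1$ if timelike ($\langle\bm{x},\bm{x}\rangle<0$); for a map into $S^1_1$ or $H^1$ this sign is constant. A smooth $\bm{a}:I\to\mathbb{R}^2_1$ is a spacelike (resp. timelike) frontal if there is smooth $\bm{\nu}:I\to H^1$ (resp. $S^1_1$), the Gauss mapping, with $\langle\frac{d\bm{a}}{dt},\bm{\nu}\rangle=0$. $\bm{\mu}:I\to S^1_1$ (resp. $H^1$) is a smooth unit field with $\langle\bm{\mu},\bm{\nu}\rangle=0$, and $\frac{d\bm{a}}{dt}=\beta\bm{\mu}$ with $\beta(t)=\epsilon_{\bm{\mu}}\langle\bm{\mu}(t),\frac{d\bm{a}}{dt}(t)\rangle$. $C_{(\bm{a}(t),\pm r(t))}=\{\bm{x}:\langle\bm{x}-\bm{a}(t),\bm{x}-\bm{a}(t)\rangle=\pm r(t)^2\}$. An envelope of $C_{(\bm{a}(t),\pm r(t))}$ is a smooth $f:I\to\mathbb{R}^2_1$ with $f(t)\in C_{(\bm{a}(t),\pm r(t))}$ and $\langle\frac{df}{dt}(t),f(t)-\bm{a}(t)\rangle=0$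 for all $t$. *)

(* Defs.v *)
From Stdlib Require Export Reals.
From Coquelicot Require Export Coquelicot.
Open Scope R_scope.

(* The Minkowski plane R^2_1 is modelled as R * R. *)
Definition vec := (R * R)%type.

Definition mink (x y : vec) : R := - (fst x * fst y) + snd x * snd y.

Definition vadd (x y : vec) : vec := (fst x + fst y, snd x + snd y).
Definition vsub (x y : vec) : vec := (fst x - fst y, snd x - snd y).
Definition vscal (c : R) (x : vec) : vec := (c * fst x, c * snd x).

(* epsilon_x: 1 if spacelike, -1 otherwise (used only for non-lightlike x) *)
Definition causal_sign (x : vec) : R :=
  if Rlt_dec 0 (mink x x) then 1 else -1.

Definition ointerval (lo hi : Rbar) (t : R) : Prop :=
  Rbar_lt lo t /\ Rbar_lt t hi.

Definition smooth_on (I : R -> Prop) (g : R -> R) : Prop :=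
  forall (n : nat) (t : R), I t -> ex_derive_n g n t.

Definition smooth_vec_on (I : R -> Prop) (g : R -> vec) : Prop :=
  smooth_on I (fun t => fst (g t)) /\ smooth_on I (fun t => snd (g t)).

Definition vderiv (g : R -> vec) (t : R) : vec :=
  (Derive (fun s => fst (g s)) t, Derive (fun s => snd (g s)) t).

Definition beta (a mu : R -> vec) (t : R) : R :=
  causal_sign (mu t) * mink (mu t) (vderiv a t).

(* Main.v *)
Require Import Defs.
From Stdlib Require Import Reals Lra Psatz Classical.
From Coquelicot Require Import Coquelicot.
Open Scope R_scope.

Lemma decomp (m n v : vec) e : e*e=1 -> mink m m = e -> mink n n = -e -> mink m n = 0 ->
  v = vadd (vscal (e*mink v m) m) (vscal (-e*mink v n) n).
Proof.
  destruct m as [m1 m2], n as [n1 n2], v as [v1 v2]; unfold mink, vadd, vscal; simpl.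
  intros He Hm Hn Hmn.
  assert (HD : (m1*n2 - m2*n1)^2 = 1).
  { replace ((m1*n2 - m2*n1)^2) with ((-(m1*n1)+m2*n2)^2 - (-(m1*m1)+m2*m2)*(-(n1*n1)+n2*n2)) by ring.
    rewrite Hm, Hn, Hmn. nra. }
  set (w1 := v1 - (e * (- (v1 * m1) + v2 * m2) * m1 + - e * (- (v1 * n1) + v2 * n2) * n1)).
  set (w2 := v2 - (e * (- (v1 * m1) + v2 * m2) * m2 + - e * (- (v1 * n1) + v2 * n2) * n2)).
  assert (E1 : -(w1*m1) + w2*m2 = 0).
  { unfold w1, w2. transitivity ((- (v1 * m1) + v2 * m2) * (1 - e * (-(m1*m1)+m2*m2)) + e*(- (v1 * n1) + v2 * n2)*(-(m1*n1)+m2*n2)).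
    ring. rewrite Hm, Hmn. rewrite He. ring. }
  assert (E2 : -(w1*n1) + w2*n2 = 0).
  { unfold w1, w2. transitivity ((- (v1 * n1) + v2 * n2) * (1 + e * (-(n1*n1)+n2*n2)) - e*(- (v1 * m1) + v2 * m2)*(-(m1*n1)+m2*n2)).
    ring. rewrite Hn, Hmn. replace (1 + e * - e) with (1 - e*e) by ring. rewrite He. ring. }
  assert (Z1 : w1 * (m1*n2 - m2*n1) = 0).
  { transitivity ((w1*m1)*n2 - (w1*n1)*m2); [ring|].
    replace (w1*m1) with (w2*m2) by lra. replace (w1*n1) with (w2*n2) by lra. ring. }
  assert (Z2 : w2 * (m1*n2 - m2*n1) = 0).
  { transitivity ((w2*n2)*m1 - (w2*m2)*n1); [ring|].
    replace (w2*m2) with (w1*m1) by lra. replace (w2*n2) with (w1*n1) by lra. ring. }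
  assert (HD0 : m1*n2 - m2*n1 <> 0) by (intro Hc; rewrite Hc in HD; lra).
  apply Rmult_integral in Z1; apply Rmult_integral in Z2.
  destruct Z1 as [Z1|Z1]; [|contradiction]. destruct Z2 as [Z2|Z2]; [|contradiction].
  unfold w1 in Z1; unfold w2 in Z2. f_equal; lra.
Qed.

Lemma mink_vadd_r v x y m n : mink v (vadd (vscal x m) (vscal y n)) = x * mink v m + y * mink v n.
Proof. unfold mink, vadd, vscal; simpl; ring. Qed.

Lemma hyp_param P Q : P^2 - Q^2 = 1 -> 0 < P -> cosh (ln (P+Q)) = P /\ sinh (ln (P+Q)) = Q.
Proof.
  intros H HP.
  assert (Hz : 0 < P + Q) by nra.
  assert (Hi : / (P+Q) = P - Q).
  { field_simplify_eq; [nra | lra]. }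
  unfold cosh, sinh. rewrite exp_Ropp, exp_ln by exact Hz. rewrite Hi. split; field.
Qed.

Lemma I_between lo hi t0 t1 s : ointerval lo hi t0 -> ointerval lo hi t1 -> t0 <= s <= t1 -> ointerval lo hi s.
Proof.
  intros [A B] [C D] [E F]. split.
  - apply Rbar_lt_le_trans with (Finite t0); [exact A| simpl; exact E].
  - apply Rbar_le_lt_trans with (Finite t1); [simpl; exact F| exact D].
Qed.

Lemma const_sign lo hi (g : R -> R) :
  (forall t, ointerval lo hi t -> continuity_pt g t) ->
  (forall t, ointerval lo hi t -> g t <> 0) ->
  exists e, (e = 1 \/ e = -1) /\ forall t, ointerval lo hi t -> 0 < e * g t.
Proof.
  intros Hc Hnz.
  destruct (classic (exists t0, ointerval lo hi t0 /\ 0 < g t0)) as [[t0 [It0 Hp]]|Hn].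
  - exists 1. split; [left; reflexivity|]. intros t It.
    rewrite Rmult_1_l. destruct (Rlt_le_dec 0 (g t)) as [|Hle]; [assumption|].
    assert (Hneg : g t < 0) by (destruct Hle; [assumption| exfalso; exact (Hnz t It H)]).
    exfalso.
    destruct (Rtotal_order t t0) as [Hlt|[Heq|Hgt]].
    + destruct (Ranalysis5.IVT_interv g t t0) as [z [Hz Hgz]]; auto.
      intros s Hs. apply Hc. eapply I_between; [exact It| exact It0| exact Hs].
      apply (Hnz z); auto. eapply I_between; [exact It| exact It0| exact Hz].
    + subst; lra.
    + destruct (Ranalysis5.IVT_interv (fun s => - g s) t0 t) as [z [Hz Hgz]]; auto.
      intros s Hs. apply continuity_pt_opp. apply Hc. eapply I_between; [exact It0| exact It| exact Hs].
      lra. lra.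
      apply (Hnz z). eapply I_between; [exact It0| exact It| exact Hz]. lra.
  - exists (-1). split; [right; reflexivity|]. intros t It.
    destruct (Rlt_le_dec 0 (g t)) as [Hp|Hle].
    + exfalso; apply Hn; exists t; auto.
    + assert (g t < 0) by (destruct Hle; [assumption| exfalso; exact (Hnz t It H)]). lra.
Qed.

Lemma sq_derive (u1 u2 : R -> R) t : ex_derive u1 t -> ex_derive u2 t ->
 is_derive (fun s => -(u1 s * u1 s) + u2 s * u2 s) t (-(2 * u1 t * Derive u1 t) + 2*u2 t * Derive u2 t).
Proof.
  intros. auto_derive. auto.
  replace (Derive (fun x => u1 x) t) with (Derive u1 t) by reflexivity.
  replace (Derive (fun x => u2 x) t) with (Derive u2 t) by reflexivity. ring.
Qed.

Lemma I_locally lo hi t : ointerval lo hi t -> locally t (ointerval lo hi).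
Proof.
  intros [A B]. apply filter_and.
  - exact (open_Rbar_gt' t lo A).
  - exact (open_Rbar_lt' t hi B).
Qed.
Lemma env_deriv lo hi a f r nut sigma t :
  smooth_vec_on (ointerval lo hi) a -> smooth_vec_on (ointerval lo hi) f ->
  smooth_on (ointerval lo hi) r -> (forall t, ointerval lo hi t -> 0 < r t) ->
  (forall t, ointerval lo hi t ->
     mink (vsub (f t) (a t)) (vsub (f t) (a t)) = sigma * (r t) ^ 2 /\
     mink (vderiv f t) (vsub (f t) (a t)) = 0) ->
  (forall t, ointerval lo hi t -> f t = vadd (a t) (vscal (r t) (nut t))) ->
  ointerval lo hi t -> sigma * Derive r t = - mink (vderiv a t) (nut t).
Proof.
  intros [Ha1 Ha2] [Hf1 Hf2] Hr Hrpos Henv Hfe It.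
  assert (dA1 : ex_derive (fun s => fst (a s)) t) by exact (Ha1 1%nat t It).
  assert (dA2 : ex_derive (fun s => snd (a s)) t) by exact (Ha2 1%nat t It).
  assert (dF1 : ex_derive (fun s => fst (f s)) t) by exact (Hf1 1%nat t It).
  assert (dF2 : ex_derive (fun s => snd (f s)) t) by exact (Hf2 1%nat t It).
  assert (dr : ex_derive r t) by exact (Hr 1%nat t It).
  set (u1 := fun s => fst (f s) - fst (a s)).
  set (u2 := fun s => snd (f s) - snd (a s)).
  assert (du1 : ex_derive u1 t) by exact (ex_derive_minus _ _ t dF1 dA1).
  assert (du2 : ex_derive u2 t) by exact (ex_derive_minus _ _ t dF2 dA2).
  pose proof (sq_derive u1 u2 t du1 du2) as H1.
  assert (H2 : is_derive (fun s => sigma * r s ^ 2) t (sigma * (2 * r t * Derive r t))).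
  { auto_derive. auto. replace (Derive (fun x => r x) t) with (Derive r t) by reflexivity. ring. }
  assert (H3 : is_derive (fun s => -(u1 s * u1 s) + u2 s * u2 s) t (sigma * (2 * r t * Derive r t))).
  { apply is_derive_ext_loc with (f := fun s => sigma * r s ^ 2); [|exact H2].
    apply filter_imp with (P := ointerval lo hi); [|apply I_locally; exact It].
    intros s Is. destruct (Henv s Is) as [E _]. rewrite <- E. unfold mink, vsub, u1, u2; simpl. ring. }
  apply is_derive_unique in H1. apply is_derive_unique in H3. rewrite H1 in H3. clear H1.
  assert (Du1 : Derive u1 t = Derive (fun s => fst (f s)) t - Derive (fun s => fst (a s)) t)
    by (unfold u1; apply Derive_minus; auto).
  assert (Du2 : Derive u2 t = Derive (fun s => snd (f s)) t - Derive (fun s => snd (a s)) t)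
    by (unfold u2; apply Derive_minus; auto).
  rewrite Du1, Du2 in H3.
  destruct (Henv t It) as [_ E2].
  assert (Eu1 : u1 t = r t * fst (nut t)) by (unfold u1; rewrite (Hfe t It); simpl; ring).
  assert (Eu2 : u2 t = r t * snd (nut t)) by (unfold u2; rewrite (Hfe t It); simpl; ring).
  unfold mink, vderiv, vsub in *; simpl in *.
  fold (u1 t) in E2. fold (u2 t) in E2.
  rewrite Eu1, Eu2 in H3, E2.
  pose proof (Hrpos t It) as Hp.
  apply Rmult_eq_reg_l with (r t); [|lra].
  nra.
Qed.

Lemma exd_quot (F1 F2 A1 A2 M1 M2 r : R -> R) e t : ex_derive F1 t -> ex_derive F2 t ->
  ex_derive A1 t -> ex_derive A2 t -> ex_derive M1 t -> ex_derive M2 t -> ex_derive r t -> r t <> 0 ->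
  ex_derive (fun s => e * (- ((F1 s - A1 s) * M1 s) + (F2 s - A2 s) * M2 s) / r s) t.
Proof. intros. auto_derive. repeat split; auto. Qed.

Theorem theorem2 (lo hi : Rbar) (a nu mu : R -> vec) (r : R -> R)
  (sigma : R) (f nut : R -> vec) :
  Rbar_lt lo hi ->
  (* a is a frontal with Gauss map nu and unit tangent field mu *)
  smooth_vec_on (ointerval lo hi) a ->
  smooth_vec_on (ointerval lo hi) nu ->
  smooth_vec_on (ointerval lo hi) mu ->
  ((forall t, ointerval lo hi t -> mink (nu t) (nu t) = -1 /\ mink (mu t) (mu t) = 1)
   \/ (forall t, ointerval lo hi t -> mink (nu t) (nu t) = 1 /\ mink (mu t) (mu t) = -1)) ->
  (forall t, ointerval lo hi t ->
     mink (vderiv a t) (nu t) = 0 /\ mink (mu t) (nu t) = 0) ->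
  (* r smooth positive *)
  smooth_on (ointerval lo hi) r ->
  (forall t, ointerval lo hi t -> 0 < r t) ->
  (* f is an envelope of C_(a(t), sigma r(t)), sigma = +1 or -1 *)
  (sigma = 1 \/ sigma = -1) ->
  smooth_vec_on (ointerval lo hi) f ->
  (forall t, ointerval lo hi t ->
     mink (vsub (f t) (a t)) (vsub (f t) (a t)) = sigma * (r t) ^ 2 /\
     mink (vderiv f t) (vsub (f t) (a t)) = 0) ->
  (* f = a + r nut with nut into S^1_1 (sigma = 1) or H^1 (sigma = -1) *)
  (forall t, ointerval lo hi t ->
     f t = vadd (a t) (vscal (r t) (nut t)) /\ mink (nut t) (nut t) = sigma) ->
  ((forall t, ointerval lo hi t -> causal_sign (nut t) * causal_sign (mu t) = 1) ->
   exists (theta : R -> R) (e1 e2 : R),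
     (e1 = 1 \/ e1 = -1) /\ (e2 = 1 \/ e2 = -1) /\
     (forall t, ointerval lo hi t ->
        nut t = vadd (vscal (e1 * cosh (theta t)) (mu t))
                     (vscal (e2 * sinh (theta t)) (nu t))) /\
     ((forall t, ointerval lo hi t ->
         Derive r t + beta a mu t * cosh (theta t) = 0) \/
      (forall t, ointerval lo hi t ->
         Derive r t - beta a mu t * cosh (theta t) = 0)))
  /\
  ((forall t, ointerval lo hi t -> causal_sign (nut t) * causal_sign (mu t) = -1) ->
   exists (theta : R -> R) (e2 : R),
     (e2 = 1 \/ e2 = -1) /\
     (forall t, ointerval lo hi t ->
        nut t = vadd (vscal (sinh (theta t)) (mu t))
                     (vscal (e2 * cosh (theta t)) (nu t))) /\
     (forall t, ointerval lo hi t ->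
        Derive r t - beta a mu t * sinh (theta t) = 0)).
Proof.
  intros Hlt Ha Hnu Hmu Hframe Horth Hr Hrpos Hsig Hf Henv Hnut.
  assert (Hfr : exists e, (e = 1 \/ e = -1) /\ forall t, ointerval lo hi t ->
            mink (mu t) (mu t) = e /\ mink (nu t) (nu t) = -e).
  { destruct Hframe as [H|H]; [exists 1 | exists (-1)]; (split; [auto|]);
      intros t It; destruct (H t It); split; lra. }
  destruct Hfr as [e [He Hfr]].
  assert (He2 : e * e = 1) by (destruct He; subst; ring).
  set (X := fun t => e * mink (nut t) (mu t)).
  set (Y := fun t => - e * mink (nut t) (nu t)).
  assert (Hdec : forall t, ointerval lo hi t -> nut t = vadd (vscal (X t) (mu t)) (vscal (Y t) (nu t))).
  { intros t It. destruct (Hfr t It). apply decomp; auto. apply Horth; auto. }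
  assert (Hnorm : forall t, ointerval lo hi t -> e * (X t)^2 - e * (Y t)^2 = sigma).
  { intros t It. destruct (Hnut t It) as [_ Hs]. rewrite <- Hs.
    rewrite (Hdec t It) at 2. rewrite mink_vadd_r. unfold X, Y.
    transitivity ((e*e) * (e * mink (nut t) (mu t) ^ 2 - e * mink (nut t) (nu t) ^ 2)); [ring|].
    rewrite He2. ring. }
  assert (Hder : forall t, ointerval lo hi t -> sigma * Derive r t = - e * X t * beta a mu t).
  { intros t It. rewrite (env_deriv lo hi a f r nut sigma t Ha Hf Hr Hrpos Henv
                   (fun s Is => proj1 (Hnut s Is)) It).
    rewrite (Hdec t It), mink_vadd_r.
    destruct (Horth t It) as [Han _]. destruct (Hfr t It) as [Hm _].
    unfold beta, causal_sign. rewrite Hm.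
    assert (Hs1 : mink (vderiv a t) (nu t) = 0) by (rewrite <- Han; unfold mink; ring).
    rewrite Hs1.
    replace (mink (mu t) (vderiv a t)) with (mink (vderiv a t) (mu t)) by (unfold mink; ring).
    destruct He; subst e.
    - destruct (Rlt_dec 0 1); [ring | lra].
    - destruct (Rlt_dec 0 (-1)); [lra | ring]. }
  assert (Hcmu : forall t, ointerval lo hi t -> causal_sign (mu t) = e).
  { intros t It. unfold causal_sign. rewrite (proj1 (Hfr t It)).
    destruct He; subst; destruct (Rlt_dec 0 _); lra. }
  assert (Hcnut : forall t, ointerval lo hi t -> causal_sign (nut t) = sigma).
  { intros t It. unfold causal_sign. rewrite (proj2 (Hnut t It)).
    destruct Hsig; subst; destruct (Rlt_dec 0 _); lra. }
  assert (Hcont : forall (m : R -> vec), smooth_vec_on (ointerval lo hi) m ->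
            forall t, ointerval lo hi t ->
            continuity_pt (fun s => e * mink (vsub (f s) (a s)) (m s) / r s) t).
  { intros m [Hm1 Hm2] t It.
    destruct Ha as [Ha1 Ha2]. destruct Hf as [Hf1 Hf2].
    assert (dA1 : ex_derive (fun s => fst (a s)) t) by exact (Ha1 1%nat t It).
    assert (dA2 : ex_derive (fun s => snd (a s)) t) by exact (Ha2 1%nat t It).
    assert (dF1 : ex_derive (fun s => fst (f s)) t) by exact (Hf1 1%nat t It).
    assert (dF2 : ex_derive (fun s => snd (f s)) t) by exact (Hf2 1%nat t It).
    assert (dM1 : ex_derive (fun s => fst (m s)) t) by exact (Hm1 1%nat t It).
    assert (dM2 : ex_derive (fun s => snd (m s)) t) by exact (Hm2 1%nat t It).
    assert (dr : ex_derive r t) by exact (Hr 1%nat t It).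
    pose proof (Hrpos t It).
    apply continuity_pt_filterlim.
    assert (Hd : ex_derive (fun s => e * mink (vsub (f s) (a s)) (m s) / r s) t).
    2: exact (@ex_derive_continuous R_AbsRing R_NormedModule _ t Hd).
    unfold mink, vsub; simpl.
    exact (exd_quot (fun s => fst (f s)) (fun s => snd (f s)) (fun s => fst (a s)) (fun s => snd (a s))
             (fun s => fst (m s)) (fun s => snd (m s)) r e t dF1 dF2 dA1 dA2 dM1 dM2 dr ltac:(lra)). }
  assert (HXeq : forall t, ointerval lo hi t ->
            X t = (fun s => e * mink (vsub (f s) (a s)) (mu s) / r s) t).
  { intros t It. simpl. unfold X. rewrite (proj1 (Hnut t It)). pose proof (Hrpos t It).
    unfold mink, vsub, vadd, vscal; simpl. field. lra. }
  assert (HYeq : forall t, ointerval lo hi t ->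
            Y t = (fun s => - (e * mink (vsub (f s) (a s)) (nu s) / r s)) t).
  { intros t It. simpl. unfold Y. rewrite (proj1 (Hnut t It)). pose proof (Hrpos t It).
    unfold mink, vsub, vadd, vscal; simpl. field. lra. }
  split.
  - intros Hc.
    assert (Hse : forall t, ointerval lo hi t -> sigma = e).
    { intros t It. pose proof (Hc t It) as H. rewrite Hcmu, Hcnut in H by auto.
      destruct He; subst; lra. }
    assert (HXY : forall t, ointerval lo hi t -> X t ^ 2 - Y t ^ 2 = 1).
    { intros t It. pose proof (Hnorm t It) as H. rewrite (Hse t It) in H.
      destruct He; subst; lra. }
    destruct (const_sign lo hi (fun s => e * mink (vsub (f s) (a s)) (mu s) / r s)) as [e1 [He1 Hpos]].
    { intros t It. apply Hcont; auto. }
    { intros t It. rewrite <- HXeq by auto. intro H0. pose proof (HXY t It). rewrite H0 in H. nra. }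
    exists (fun t => ln (e1 * X t + Y t)), e1, 1.
    assert (Hpar : forall t, ointerval lo hi t ->
              cosh (ln (e1 * X t + Y t)) = e1 * X t /\ sinh (ln (e1 * X t + Y t)) = Y t).
    { intros t It. apply hyp_param.
      - replace ((e1 * X t)^2) with ((e1*e1) * X t ^2) by ring.
        replace (e1*e1) with 1 by (destruct He1; subst; ring). rewrite Rmult_1_l. auto.
      - rewrite HXeq by auto. auto. }
    assert (He1sq : e1 * e1 = 1) by (destruct He1; subst; ring).
    split; [auto|]. split; [left; reflexivity|]. split.
    + intros t It. rewrite (Hdec t It). destruct (Hpar t It) as [Hc1 Hs1].
      rewrite Hc1, Hs1. f_equal; f_equal; [|ring].
      transitivity ((e1*e1) * X t); [rewrite He1sq; ring | ring].
    + destruct He1; subst e1; [left | right]; intros t It;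
        destruct (Hpar t It) as [Hc1 _]; rewrite Hc1;
        pose proof (Hder t It) as Hd; rewrite (Hse t It) in Hd;
        destruct He; subst e; lra.
  - intros Hc.
    assert (Hse : forall t, ointerval lo hi t -> sigma = - e).
    { intros t It. pose proof (Hc t It) as H. rewrite Hcmu, Hcnut in H by auto.
      destruct He; subst; lra. }
    assert (HXY : forall t, ointerval lo hi t -> Y t ^ 2 - X t ^ 2 = 1).
    { intros t It. pose proof (Hnorm t It) as H. rewrite (Hse t It) in H.
      destruct He; subst; lra. }
    destruct (const_sign lo hi (fun s => - (e * mink (vsub (f s) (a s)) (nu s) / r s))) as [e2 [He2' Hpos]].
    { intros t It. apply continuity_pt_opp. apply Hcont; auto. }
    { intros t It. rewrite <- HYeq by auto. intro H0. pose proof (HXY t It). rewrite H0 in H. nra. }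
    exists (fun t => ln (e2 * Y t + X t)), e2.
    assert (Hpar : forall t, ointerval lo hi t ->
              cosh (ln (e2 * Y t + X t)) = e2 * Y t /\ sinh (ln (e2 * Y t + X t)) = X t).
    { intros t It. apply hyp_param.
      - replace ((e2 * Y t)^2) with ((e2*e2) * Y t ^2) by ring.
        replace (e2*e2) with 1 by (destruct He2'; subst; ring). rewrite Rmult_1_l. auto.
      - rewrite HYeq by auto. auto. }
    assert (He2sq : e2 * e2 = 1) by (destruct He2'; subst; ring).
    split; [auto|]. split.
    + intros t It. rewrite (Hdec t It). destruct (Hpar t It) as [Hc1 Hs1].
      rewrite Hc1, Hs1. f_equal; f_equal.
      transitivity ((e2*e2) * Y t); [rewrite He2sq; ring | ring].
    + intros t It. destruct (Hpar t It) as [_ Hs1]. rewrite Hs1.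
      pose proof (Hder t It) as Hd; rewrite (Hse t It) in Hd.
      destruct He; subst e; lra.
Qed.
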